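(* Let $f:[0,1]\to[0,1]$ be a continuous surjective function that does not admit a splitting sequence. If $f$ admits a 2-cycle $\{s,t\}$ with $s\in\{0,1\}$, then $(s,t,s,t,\dots)$ and $(t,s,t,s,\dots)$ are endpoints of $\varprojlim f$.
   Context: $\varprojlim f=\{\mathbf x=(x_0,x_1,\dots)\in[0,1]^{\mathbb N}: f(x_{n+1})=x_n\ \forall n\}$ with the product topology. A point $p$ of a continuum $X$ is an endpoint of $X$ if for any two subcontinua $A,B$ of $X$ containing $p$, $A\subseteq B$ or $B\subseteq A$. A 2-cycle is a set $\{s,t\}$ with $s\ne t$, $f(s)=t$, $f(t)=s$. A sequence $(T_n)_{n\in\mathbb N}$ of closed intervals $T_n\subsetneq[0,1]$ (possibly degenerate) is tight if $f(T_{n+1})=T_n$ for every $n$ and $T_n$ is nondegenerate for all sufficiently large $n$. A tight sequence $(T_n)$, $T_n=[l_n,r_n]$, is a splitting sequence admitted by $f$ if there are an infinite set $N\subseteq\mathbb N$ and nondegenerate closed intervals $S_n\subseteq[0,1]$ ($n\in N$) with $S_n\cap T_n\subseteq\{l_n,r_n\}$ and $f(S_n)=f(T_n)$ for all $n\in N$. *)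

(* Defs.v *)
From HB Require Import structures.
From mathcomp Require Import all_boot all_order all_algebra.
From mathcomp Require Import all_classical all_reals all_analysis.
Set Implicit Arguments. Unset Strict Implicit. Unset Printing Implicit Defensive.
Import Order.TTheory GRing.Theory Num.Theory numFieldTopology.Exports numFieldNormedType.Exports.
Local Open Scope classical_set_scope.
Local Open Scope ring_scope.

(* The ambient space [0,1]^N is modelled inside R^N = nat -> R with the
   product (pointwise) topology {ptws nat -> R}. *)
Notation seqspace R := {ptws nat -> R}.

Definition invlim (R : realType) (f : R -> R) : set (seqspace R) :=
  [set x | (forall n, x n \in `[0, 1]) /\ (forall n, f (x n.+1) = x n)].

(* a subcontinuum of X : nonempty compact connected subset of X
   (the ambient space is Hausdorff, so compact = closed in X) *)
Definition subcontinuum (R : realType) (X A : set (seqspace R)) : Prop :=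
  A `<=` X /\ A !=set0 /\ compact A /\ connected A.

Definition is_endpoint (R : realType) (X : set (seqspace R)) (p : seqspace R) : Prop :=
  X p /\
  forall A B, subcontinuum X A -> subcontinuum X B -> A p -> B p ->
    A `<=` B \/ B `<=` A.

Definition tight (R : realType) (f : R -> R) (l r : nat -> R) : Prop :=
  (forall n, 0 <= l n /\ l n <= r n /\ r n <= 1) /\
  (forall n, [set` `[l n, r n]] != [set` `[0, 1]] :> set R) /\
  (forall n, f @` [set` `[l n.+1, r n.+1]] = [set` `[l n, r n]]) /\
  (exists N, forall n, (N <= n)%N -> l n < r n).

Definition splitting_sequence (R : realType) (f : R -> R) (l r : nat -> R) : Prop :=
  tight f l r /\
  exists (N : set nat) (a b : nat -> R),
    (forall m, exists n, (m <= n)%N /\ N n) /\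
    (forall n, N n ->
       0 <= a n /\ a n < b n /\ b n <= 1 /\
       [set` `[a n, b n]] `&` [set` `[l n, r n]] `<=` [set l n; r n] /\
       f @` [set` `[a n, b n]] = f @` [set` `[l n, r n]]).

Definition admits_splitting (R : realType) (f : R -> R) : Prop :=
  exists l r : nat -> R, splitting_sequence f l r.

Definition alt_seq (R : realType) (u v : R) : seqspace R :=
  fun n => if odd n then v else u.

(* Main.v *)
Require Import Defs.
From HB Require Import structures.
From mathcomp Require Import all_boot all_order all_algebra.
From mathcomp Require Import all_classical all_reals all_analysis.
Import Order.TTheory GRing.Theory Num.Theory numFieldTopology.Exports numFieldNormedType.Exports.
Local Open Scope classical_set_scope.
Local Open Scope ring_scope.

Section Helpers.
Variable R : realType.

Lemma agree_down (f : R -> R) (x y : seqspace R) :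
  (forall n, f (x n.+1) = x n) -> (forall n, f (y n.+1) = y n) ->
  forall j d, x (j + d)%N = y (j + d)%N -> x j = y j.
Proof.
move=> hx hy j d; elim: d => [|d IH]; first by rewrite addn0.
move=> e; apply: IH; rewrite addnS in e.
by rewrite -hx -hy e.
Qed.

Lemma agree_le (f : R -> R) (x y : seqspace R) :
  (forall n, f (x n.+1) = x n) -> (forall n, f (y n.+1) = y n) ->
  forall j k, (j <= k)%N -> x k = y k -> x j = y j.
Proof.
move=> hx hy j k jk e; have := @agree_down f x y hx hy j (k - j)%N. by rewrite subnKC //; apply.
Qed.

Lemma seqspace_hausdorff : hausdorff_space (seqspace R).
Proof. exact: (@hausdorff_product nat (fun _ => R) (fun _ => @Rhausdorff R)). Qed.

Lemma closed_agree (B : set (seqspace R)) (x : seqspace R) :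
  closed B ->
  (forall m, exists y : seqspace R, B y /\ forall j, (j <= m)%N -> y j = x j) ->
  B x.
Proof.
move=> cB H.
have [ys hys] := choice H.
apply: (@closed_cvg nat _ \oo _ ys B cB); first by apply: nearW => m; exact: (hys m).1.
apply/pointwise_cvgP => t.
apply: (@cvg_near_cst _ _ (x t) (fun m => ys m t) \oo _).
near=> m; apply: (hys m).2.
near: m; exists t => //.
Unshelve. all: by end_near.
Qed.


Lemma proj_interval (A : set (seqspace R)) n :
  connected A -> is_interval [set x n | x in A].
Proof.
move=> cA; apply/connected_intervalP; apply: connected_continuous_connected => //.
apply: continuous_subspaceT => x; exact: (@proj_continuous nat (fun _ => R) n).
Qed.

Lemma comparable_intervals (C D : set R) (s : R) :
  (s = 0 \/ s = 1) -> is_interval C -> is_interval D ->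
  (forall c, C c -> 0 <= c <= 1) -> (forall c, D c -> 0 <= c <= 1) ->
  C s -> D s -> C `<=` D \/ D `<=` C.
Proof.
move=> hs iC iD bC bD Cs Ds.
have [CD|nCD] := pselect (C `<=` D); first by left.
have [DC|nDC] := pselect (D `<=` C); first by right.
exfalso.
move/existsNP: nCD => [u /not_implyP [Cu nDu]].
move/existsNP: nDC => [v /not_implyP [Dv nCv]].
have /andP[u0 u1] := bC _ Cu; have /andP[v0 v1] := bD _ Dv.
case: hs => hs0; subst s; case: (leP u v) => uv.
- by apply: nDu; apply: (iD 0 v) => //; rewrite u0 uv.
- by apply: nCv; apply: (iC 0 u) => //; rewrite v0 (ltW uv).
- by apply: nCv; apply: (iC u 1) => //; rewrite uv v1.
- by apply: nDu; apply: (iD v 1) => //; rewrite (ltW uv) u1.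
Qed.


Lemma endpoint_of (f : R -> R) (p : seqspace R) (s : R) :
  (s = 0 \/ s = 1) -> invlim f p ->
  (forall m, exists n, (m <= n)%N /\ p n = s) -> is_endpoint (invlim f) p.
Proof.
move=> hs ip inf; split => // A B [AX [_ [cA conA]]] [BX [_ [cB conB]]] Ap Bp.
have down (A' B' : set (seqspace R)) : A' `<=` invlim f -> B' `<=` invlim f ->
    forall j k, (j <= k)%N -> [set x k | x in A'] `<=` [set x k | x in B'] ->
    [set x j | x in A'] `<=` [set x j | x in B'].
  move=> A'X B'X j k jk sub _ [x Ax <-].
  have [y By yx] : [set x k | x in B'] (x k) by apply: sub; exists x.
  exists y => //; apply: (@agree_le f y x _ _ j k jk yx).
    by move=> n; exact: (B'X y By).2.
  by move=> n; exact: (A'X x Ax).2.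
have lift (A' B' : set (seqspace R)) : A' `<=` invlim f -> B' `<=` invlim f ->
    compact B' ->
    (forall n, p n = s -> [set x n | x in A'] `<=` [set x n | x in B']) ->
    A' `<=` B'.
  move=> A'X B'X cB' H x Ax.
  apply: closed_agree; first exact: compact_closed seqspace_hausdorff cB'.
  move=> m; have [n [mn pn]] := inf m.
  have [y By yx] : [set x n | x in B'] (x n) by apply: (H n pn); exists x.
  exists y; split => // j jm.
  apply: (@agree_le f y x _ _ j n (leq_trans jm mn) yx).
    by move=> k; exact: (B'X y By).2.
  by move=> k; exact: (A'X x Ax).2.
have bnd (A' : set (seqspace R)) n : A' `<=` invlim f ->
    forall c, [set x n | x in A'] c -> 0 <= c <= 1.
  move=> A'X _ [x Ax <-]; have := (A'X x Ax).1 n.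
  by rewrite in_itv.
have comp n : p n = s ->
    [set x n | x in A] `<=` [set x n | x in B] \/ [set x n | x in B] `<=` [set x n | x in A].
  move=> pn; apply: (@comparable_intervals _ _ s hs).
  - exact: proj_interval.
  - exact: proj_interval.
  - exact: bnd.
  - exact: bnd.
  - by exists p.
  - by exists p.
have [AB|nAB] := pselect (forall n, p n = s -> [set x n | x in A] `<=` [set x n | x in B]).
  by left; apply: lift.
have [BA|nBA] := pselect (forall n, p n = s -> [set x n | x in B] `<=` [set x n | x in A]).
  by right; apply: lift.
exfalso.
move/existsNP: nAB => [n1 /not_implyP [_ n1AB]].
move/existsNP: nBA => [n2 /not_implyP [_ n2BA]].
have [n [nn pn]] := inf (n1 + n2)%N.
case: (comp n pn) => sub.
- by apply: n1AB; apply: (down A B AX BX n1 n) => //; apply: leq_trans nn; exact: leq_addr.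
- by apply: n2BA; apply: (down B A BX AX n2 n) => //; apply: leq_trans nn; exact: leq_addl.
Qed.

End Helpers.

Theorem lemma3p20 (R : realType) (f : R -> R) (s t : R) :
  {within [set` `[0, 1]], continuous f} ->
  f @` [set` `[0, 1]] = [set` `[0, 1]] ->
  ~ admits_splitting f ->
  s != t -> f s = t -> f t = s -> (s = 0 \/ s = 1) ->
  is_endpoint (invlim f) (alt_seq s t) /\ is_endpoint (invlim f) (alt_seq t s).
Proof.
move=> _ fsurj _ _ fst fts hs.
have s01 : s \in `[0, 1].
  by case: hs => ->; rewrite in_itv /= ?lexx ?ler01.
have t01 : t \in `[0, 1].
  have : [set` `[0, 1]] t by rewrite -fsurj; exists s.
  by [].
have inv (u v : R) : u \in `[0, 1] -> v \in `[0, 1] -> f u = v -> f v = u ->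
    invlim f (alt_seq u v).
  move=> u01 v01 fuv fvu; split=> n; rewrite /alt_seq.
    by case: ifP.
  by rewrite /=; case: (odd n).
split.
- apply: (@endpoint_of R f _ s hs); first exact: inv.
  move=> m; exists m.*2; split; first by rewrite -addnn leq_addr.
  by rewrite /alt_seq odd_double.
- apply: (@endpoint_of R f _ s hs); first exact: inv.
  move=> m; exists m.*2.+1; split; first by rewrite -addnn; apply: leqW; exact: leq_addr.
  by rewrite /alt_seq /= odd_double.
Qed.
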